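(* Let $k \ge 3$ and $n \ge 1$ be integers and let $1 \le \rho \le n$. Suppose there exist $k-2$ mutually orthogonal latin squares of order $n$ having a common partial transversal of size $\rho$. Then there exists a $((k-1)n+\rho, k)$-packing with exactly $\rho n + D(\rho,k)$ blocks in which the largest partial parallel class has size $\rho$.
   Context: For integers $v \ge k \ge 2$, a $(v,k)$-packing is a pair $(X,\mathcal{B})$ where $X$ is a set of $v$ points and $\mathcal{B}$ is a set of $k$-subsets of $X$ (blocks) such that every pair of distinct points lies in at most one block. For integers $m \ge 0$, $D(m,k)$ denotes the maximum number of $k$-subsets of an $m$-set such that every pair of points lies in at most one of them (so $D(m,k)=0$ if $m<k$). A partial parallel class (PPC) is a set of pairwise disjoint blocks; its size is the number of blocks. ''The largest PPC has size $\rho$'' means the packing has a PPC of size $\rho$ but none of size $\rho+1$. A common (partial) transversal of size $\rho$ of a set of latin squares of order $n$ is a set of $\rho$ cells, no two in the same row or the same column, such that in each of the latin squares the symbols in these $\rho$ cells are pairwise distinct. *)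

(* Defs.v *)
From mathcomp Require Import all_boot.
Set Implicit Arguments. Unset Strict Implicit. Unset Printing Implicit Defensive.

Definition latin_square (n : nat) (L : 'I_n -> 'I_n -> 'I_n) : Prop :=
  (forall i, injective (L i)) /\ (forall j, injective (fun i => L i j)).

(* Two latin squares are orthogonal: superimposing them, every ordered pair
   of symbols occurs (exactly) once, i.e. the cell -> pair map is injective. *)
Definition orthogonal (n : nat) (L1 L2 : 'I_n -> 'I_n -> 'I_n) : Prop :=
  forall c d : 'I_n * 'I_n,
    (L1 c.1 c.2, L2 c.1 c.2) = (L1 d.1 d.2, L2 d.1 d.2) -> c = d.

Definition MOLS (m n : nat) (L : 'I_m -> 'I_n -> 'I_n -> 'I_n) : Prop :=
  (forall t, latin_square (L t)) /\
  (forall s t, s != t -> orthogonal (L s) (L t)).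

Definition common_partial_transversal (m n : nat)
    (L : 'I_m -> 'I_n -> 'I_n -> 'I_n) (C : {set 'I_n * 'I_n}) (rho : nat) : Prop :=
  #|C| = rho /\
  forall c d, c \in C -> d \in C -> c != d ->
    [/\ c.1 != d.1, c.2 != d.2 &
        forall t, L t c.1 c.2 != L t d.1 d.2].

Definition is_packing (v k : nat) (B : {set {set 'I_v}}) : Prop :=
  (forall b, b \in B -> #|b| = k) /\
  (forall x y : 'I_v, x != y ->
     #|[set b in B | (x \in b) && (y \in b)]| <= 1).

Definition is_packingb (v k : nat) (B : {set {set 'I_v}}) : bool :=
  [forall b in B, #|b| == k] &&
  [forall x : 'I_v, forall y : 'I_v,
     (x != y) ==> (#|[set b in B | (x \in b) && (y \in b)]| <= 1)].

(* D(m,k): maximum number of blocks of an (m,k)-packing (0 if m < k). *)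
Definition D (m k : nat) : nat :=
  \max_(B : {set {set 'I_m}} | is_packingb k B) #|B|.

Definition is_PPC (v : nat) (B P : {set {set 'I_v}}) : Prop :=
  P \subset B /\
  (forall b c, b \in P -> c \in P -> b != c -> [disjoint b & c]).

Definition largest_PPC_size (v : nat) (B : {set {set 'I_v}}) (rho : nat) : Prop :=
  (exists P, is_PPC B P /\ #|P| = rho) /\
  ~ (exists P, is_PPC B P /\ #|P| = rho.+1).

(* Main.v *)
Require Import Defs.
From mathcomp Require Import all_boot zify.
Set Implicit Arguments. Unset Strict Implicit. Unset Printing Implicit Defensive.

Lemma le1_from_eq (T : finType) (A : {set T}) :
  (forall x y, x \in A -> y \in A -> x = y) -> #|A| <= 1.
Proof. by move=> H; apply/card_le1_eqP => x y xA yA; apply: H. Qed.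

Lemma pair_le1 (T : finType) (B : {set {set T}}) (x y : T) :
  x != y ->
  (forall b b', b \in B -> b' \in B -> b != b' -> #|b :&: b'| <= 1) ->
  #|[set b in B | (x \in b) && (y \in b)]| <= 1.
Proof.
move=> xy H; apply: le1_from_eq => b b'.
rewrite !inE => /andP[bB /andP[xb yb]] /andP[b'B /andP[xb' yb']].
apply/eqP; apply/negP => /negP nb.
have := H _ _ bB b'B nb.
have sub : [set x; y] \subset b :&: b'.
  by apply/subsetP => z; rewrite !inE => /orP[]/eqP->; rewrite ?xb ?xb' ?yb ?yb'.
have := subset_leq_card sub; rewrite cards2 xy => h1 h2.
by have := leq_trans h1 h2.
Qed.

Lemma inter_from_pack (T : finType) (B : {set {set T}}) b b' :
  (forall x y : T, x != y -> #|[set b in B | (x \in b) && (y \in b)]| <= 1) ->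
  b \in B -> b' \in B -> b != b' -> #|b :&: b'| <= 1.
Proof.
move=> H bB b'B nb; apply: le1_from_eq => x y.
rewrite !inE => /andP[xb xb'] /andP[yb yb'].
apply/eqP; apply/negP => /negP xy.
have := H _ _ xy.
have sub : [set b; b'] \subset [set b in B | (x \in b) && (y \in b)].
  by apply/subsetP => z; rewrite !inE => /orP[]/eqP->; rewrite ?xb ?xb' ?yb ?yb' ?bB ?b'B.
have := subset_leq_card sub; rewrite cards2 nb => h1 h2.
by have := leq_trans h1 h2.
Qed.

Section Construction.
Variables (m n r : nat).
Hypotheses (Hr : 0 < r) (Hrn : r <= n).
Variable L : 'I_m -> 'I_n -> 'I_n -> 'I_n.
Hypothesis HL : MOLS L.
Variable e : 'I_r -> 'I_n * 'I_n.
Hypothesis He : forall i j, i != j ->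
  [/\ (e i).1 != (e j).1, (e i).2 != (e j).2 &
      forall t, L t (e i).1 (e i).2 != L t (e j).1 (e j).2].

Local Notation v := ((m.+1) * n + r).
Definition G := option (option 'I_m).

Definition ptn (g : G) (s : nat) : nat :=
  match g with None => s | Some None => r + s | Some (Some t) => r + n + t * n + s end.
Definition dom (g : G) (s : nat) : bool := if g is None then s < r else s < n.

Lemma ptn_lt g s : dom g s -> ptn g s < v.
Proof.
case: g => [[t|]|] /=; last by lia.
  have := ltn_ord t => ht hs.
  have : t * n + n <= m * n by rewrite -mulSnr leq_mul2r ht orbT.
  lia.
lia.
Qed.

Lemma ptn_inj g g' s s' : dom g s -> dom g' s' -> ptn g s = ptn g' s' -> g = g' /\ s = s'.
Proof.
case: g => [[t|]|]; case: g' => [[t'|]|] /=; try lia;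
  try (move=> h1 h2 E; split; [by [] | lia]).
move=> hs hs' E.
have E' : t * n + s = t' * n + s' by lia.
have n0 : 0 < n by lia.
have := congr1 (fun x => x %/ n) E'.
rewrite /= !divnMDl // !divn_small // !addn0 => tt.
have -> : t = t' by apply: val_inj.
split => //; lia.
Qed.

Lemma v0 : 0 < v. Proof. lia. Qed.
Definition x0 : 'I_v := Ordinal v0.
Definition pt g s : 'I_v := insubd x0 (ptn g s).

Lemma val_pt g s : dom g s -> val (pt g s) = ptn g s.
Proof. by move=> h; rewrite /pt val_insubd ptn_lt. Qed.

Lemma pt_inj g g' s s' : dom g s -> dom g' s' -> pt g s = pt g' s' -> g = g' /\ s = s'.
Proof.
move=> h h' E; apply: ptn_inj => //.
by rewrite -!val_pt // E.
Qed.

Definition cell := ('I_r * 'I_n)%type.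
Definition cv (g : G) (c : cell) : nat :=
  match g with None => c.1 | Some None => c.2 | Some (Some t) => L t (e c.1).1 c.2 end.
Lemma dom_cv g c : dom g (cv g c).
Proof. by case: g => [[t|]|] /=. Qed.

Definition blk (c : cell) : {set 'I_v} := [set pt g (cv g c) | g : G].

Lemma mem_blk g s c : dom g s -> (pt g s \in blk c) = (cv g c == s).
Proof.
move=> h; apply/imsetP/eqP => [[g' _ E]|<-]; last by exists g.
by have [-> ->] := pt_inj (dom_cv g' c) h (esym E).
Qed.

Lemma blk_common c c' x : x \in blk c -> x \in blk c' -> exists g, cv g c = cv g c' /\ x = pt g (cv g c).
Proof.
move=> /imsetP[g _ ->] /imsetP[g' _ E].
have [eg es] := pt_inj (dom_cv g c) (dom_cv g' c') E.
by exists g; split => //; rewrite es eg.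
Qed.

Lemma card_G : #|{: G}| = m.+2.
Proof. by rewrite card_option card_option card_ord. Qed.

Lemma card_blk c : #|blk c| = m.+2.
Proof.
rewrite card_imset ?card_G // => g g' E.
by have [] := pt_inj (dom_cv g c) (dom_cv g' c) E.
Qed.

Lemma row_inj i j : (e i).1 = (e j).1 -> i = j.
Proof.
move=> E; apply/eqP; apply/negP => /negP ij.
by have [/eqP] := He ij.
Qed.

Lemma cv_inj2 g g' c c' : g != g' -> cv g c = cv g c' -> cv g' c = cv g' c' -> c = c'.
Proof.
have [HLs Lo] := HL.
case: c => i j; case: c' => i' j'.
have EI : forall (a b : 'I_r), (a : nat) = b -> a = b by move=> a b h; apply: val_inj; exact: h.
have EN : forall (a b : 'I_n), (a : nat) = b -> a = b by move=> a b h; apply: val_inj; exact: h.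
have rc : forall t, L t (e i).1 j = L t (e i').1 j' -> i = i' -> (i, j) = (i', j').
  by move=> t E ii; subst i'; have [Lr _] := HLs t; rewrite (Lr _ _ _ E).
have cc : forall t, L t (e i).1 j = L t (e i').1 j' -> j = j' -> (i, j) = (i', j').
  by move=> t E jj; subst j'; have [_ Lc] := HLs t; have := (Lc _ _ _ E) => /row_inj ->.
case: g => [[t|]|]; case: g' => [[t'|]|] //= ne.
- move=> /EN E1 /EN E2.
  have tt : t != t' by apply: contra ne => /eqP ->.
  have := Lo _ _ tt ((e i).1, j) ((e i').1, j').
  rewrite /= E1 E2 => /(_ erefl) [/row_inj -> ->] //.
- by move=> /EN E /EN jj; apply: cc E jj.
- by move=> /EN E /EI ii; apply: rc E ii.
- by move=> /EN jj /EN E; apply: cc E jj.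
- by move=> /EN jj /EI ii; rewrite ii jj.
- by move=> /EI ii /EN E; apply: rc E ii.
- by move=> /EI ii /EN jj; rewrite ii jj.
Qed.

Lemma blk_inter c c' : c != c' -> #|blk c :&: blk c'| <= 1.
Proof.
move=> ne; apply: le1_from_eq => x y; rewrite !inE => /andP[xc xc'] /andP[yc yc'].
have [g [Eg ->]] := blk_common xc xc'.
have [h [Eh ->]] := blk_common yc yc'.
case: (eqVneq g h) => [->//|gh].
by move: ne; rewrite (cv_inj2 gh Eg Eh) eqxx.
Qed.

Lemma blk_cv g c c' : pt g (cv g c) \in blk c' -> cv g c' = cv g c.
Proof. by rewrite mem_blk ?dom_cv // => /eqP. Qed.

Lemma blk_inj : injective blk.
Proof.
move=> c c' E.
have h1 : pt None (cv None c) \in blk c' by rewrite -E; apply: imset_f.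
have h2 : pt (Some None) (cv (Some None) c) \in blk c' by rewrite -E; apply: imset_f.
move: (blk_cv h1) (blk_cv h2); case: c {E h1 h2} => i j; case: c' => i' j' /= E1 E2.
by congr pair; apply: val_inj.
Qed.

Lemma blk_low c x : x \in blk c -> val x < r -> x = pt None c.1.
Proof.
move=> /imsetP[g _ ->]; rewrite val_pt ?dom_cv //.
by case: g => [[t|]|] /= h; [exfalso; lia | exfalso; lia | done].
Qed.

Lemma blk_high c : exists2 x, x \in blk c & r <= val x.
Proof.
exists (pt (Some None) (cv (Some None) c)); first by apply: imset_f.
by rewrite val_pt ?dom_cv //= leq_addr.
Qed.

Definition rp (i : 'I_r) : 'I_v := pt None i.
Lemma rp_low i : val (rp i) < r.
Proof. by rewrite /rp val_pt /=; apply: ltn_ord. Qed.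
Lemma rp_inj : injective rp.
Proof.
move=> i j E; have [_ h] := pt_inj (g:=None) (g':=None) (ltn_ord i) (ltn_ord j) E.
exact: val_inj.
Qed.
Lemma rp_in_blk c : rp c.1 \in blk c.
Proof. by apply/imsetP; exists None. Qed.

Lemma main_constr (B0 : {set {set 'I_r}}) : is_packing m.+2 B0 ->
  exists B : {set {set 'I_v}},
    [/\ is_packing m.+2 B, #|B| = r * n + #|B0| & largest_PPC_size B r].
Proof.
move=> [B0card B0pair].
pose B1 := [set blk c | c : cell].
pose B2 := [set rp @: b | b : {set 'I_r} in B0].
have B2low : forall b x, b \in B2 -> x \in b -> val x < r.
  by move=> b x /imsetP[b0 _ ->] /imsetP[i _ ->]; apply: rp_low.
have B2card : forall b, b \in B2 -> #|b| = m.+2.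
  by move=> b /imsetP[b0 b0B ->]; rewrite card_imset; [apply: B0card | apply: rp_inj].
have B2inter : forall b b', b \in B2 -> b' \in B2 -> b != b' -> #|b :&: b'| <= 1.
  move=> b b' /imsetP[b0 b0B ->] /imsetP[b0' b0B' ->] ne.
  rewrite -imsetI; last by move=> ? ? _ _; apply: rp_inj.
  rewrite card_imset; last by apply: rp_inj.
  apply: inter_from_pack b0B b0B' _ => //.
  by apply: contra ne => /eqP ->.
have B12 : forall b b', b \in B1 -> b' \in B2 -> #|b :&: b'| <= 1.
  move=> b b' /imsetP[c _ ->] b'B; apply: le1_from_eq => x y.
  rewrite !inE => /andP[xc xb] /andP[yc yb].
  by rewrite (blk_low xc (B2low _ _ b'B xb)) (blk_low yc (B2low _ _ b'B yb)).
have disj : B1 :&: B2 = set0.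
  apply/setP => b; rewrite !inE; apply/negP => /andP[/imsetP[c _ ->] bB].
  have [x xc xh] := blk_high c.
  by have := B2low _ _ bB xc; rewrite ltnNge xh.
have inter : forall b b', b \in B1 :|: B2 -> b' \in B1 :|: B2 -> b != b' -> #|b :&: b'| <= 1.
  move=> b b'; rewrite !inE => /orP[bB|bB] /orP[bB'|bB'] ne.
  - move: bB bB' ne => /imsetP[c _ ->] /imsetP[c' _ ->] ne.
    by apply: blk_inter; apply: contra ne => /eqP ->.
  - exact: B12.
  - by rewrite setIC; apply: B12.
  - exact: B2inter.
have haslow : forall b, b \in B1 :|: B2 -> exists2 x, x \in b & val x < r.
  move=> b; rewrite inE => /orP[/imsetP[c _ ->]|bB].
    by exists (rp c.1); [apply: rp_in_blk | apply: rp_low].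
  have : 0 < #|b| by rewrite B2card.
  by rewrite card_gt0 => /set0Pn[x xb]; exists x => //; apply: B2low bB xb.
exists (B1 :|: B2); split.
- split.
    by move=> b; rewrite inE => /orP[/imsetP[c _ ->]|bB]; [apply: card_blk | apply: B2card].
  by move=> x y xy; apply: pair_le1.
- rewrite cardsU disj cards0 subn0 card_imset; last by apply: blk_inj.
  rewrite card_prod !card_ord card_imset //; exact: imset_inj rp_inj.
- have bound : forall P, is_PPC (B1 :|: B2) P -> #|P| <= r.
    move=> P [PB Pdisj].
    pose lowp (b : {set 'I_v}) := odflt x0 [pick x in b | val x < r].
    have lowpP : forall b, b \in P -> lowp b \in b /\ val (lowp b) < r.
      move=> b bP; rewrite /lowp; case: pickP => [x /andP[]|none] //=.
      have [x xb xl] := haslow b (subsetP PB b bP).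
      by have := none x; rewrite xb xl.
    pose lowr (b : {set 'I_v}) : 'I_r := insubd (Ordinal Hr) (val (lowp b)).
    rewrite -(card_in_imset (f := lowr)); first by apply: leq_trans (max_card _) _; rewrite card_ord.
    move=> b b' bP b'P E.
    have [lb ll] := lowpP b bP; have [lb' ll'] := lowpP b' b'P.
    have E' : lowp b = lowp b'.
      by have := congr1 val E; rewrite /lowr !val_insubd ll ll' => /val_inj.
    apply/eqP; apply/negP => /negP ne.
    have := Pdisj b b' bP b'P ne; rewrite disjoint_subset => /subsetP /(_ _ lb).
    by rewrite inE E' lb'.
  split; last by move=> [P [PP cP]]; have := bound P PP; rewrite cP ltnn.
  pose P := [set blk (i, (e i).2) | i : 'I_r].
  exists P; split; last first.
    rewrite card_imset ?card_ord // => i j /blk_inj [].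
    by move=> ->.
  split.
    apply/subsetP => b /imsetP[i _ ->]; rewrite inE; apply/orP; left; exact: imset_f.
  move=> b b' /imsetP[i _ ->] /imsetP[j _ ->] ne.
  have ij : i != j by apply: contra ne => /eqP ->.
  have [h1 h2 h3] := He ij.
  rewrite -setI_eq0; apply/eqP/setP => x; rewrite !inE; apply/negP => /andP[xi xj].
  have [g [Eg _]] := blk_common xi xj.
  move: Eg; case: g => [[t|]|] /= E.
  + by move/eqP: (h3 t); apply; apply: val_inj.
  + by move/eqP: h2; apply; apply: val_inj.
  + by move/eqP: ij; apply; apply: val_inj.
Qed.
End Construction.

Theorem theorem5p1 (k n rho : nat) :
  3 <= k -> 1 <= n -> 1 <= rho -> rho <= n ->
  (exists (L : 'I_(k - 2) -> 'I_n -> 'I_n -> 'I_n) (C : {set 'I_n * 'I_n}),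
      MOLS L /\ common_partial_transversal L C rho) ->
  exists B : {set {set 'I_((k - 1) * n + rho)}},
    [/\ is_packing k B, #|B| = rho * n + D rho k & largest_PPC_size B rho].
Proof.
case: k => [|[|m]] //.
have -> : m.+2 - 2 = m by lia.
have -> : m.+2 - 1 = m.+1 by lia.
move=> _ _ Hr Hrn [L [C [HL [HC Ht]]]].
pose e (i : 'I_rho) := enum_val (cast_ord (esym HC) i).
have He : forall i j, i != j ->
  [/\ (e i).1 != (e j).1, (e i).2 != (e j).2 &
      forall t, L t (e i).1 (e i).2 != L t (e j).1 (e j).2].
  move=> i j ij; apply: Ht; rewrite ?enum_valP //.
  apply: contra ij => /eqP /enum_val_inj /(congr1 val) /= E.
  by apply/eqP; apply: val_inj.
have pos : 0 < #|[pred B : {set {set 'I_rho}} | is_packingb m.+2 B]|.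
  apply/card_gt0P; exists set0; rewrite inE /is_packingb.
  apply/andP; split; apply/forallP => x.
    by rewrite inE.
  apply/forallP => y; apply/implyP => _.
  by apply: le1_from_eq => b c; rewrite !inE.
have [B0 B0P B0max] := @eq_bigmax_cond _ [pred B : {set {set 'I_rho}} | is_packingb m.+2 B] (fun B => #|B|) pos.
have HB0 : is_packing m.+2 B0.
  move: B0P; rewrite inE => /andP[/forallP h1 /forallP h2]; split.
    by move=> b bB; move/implyP: (h1 b) => /(_ bB) /eqP.
  by move=> x y xy; move/forallP: (h2 x) => /(_ y) /implyP; apply.
have [B [H1 H2 H3]] := @main_constr m n rho Hr Hrn L HL e He B0 HB0.
exists B; split => //.
by rewrite H2 /D -B0max.
Qed.
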